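(* For $\varepsilon\in(0,1)$, the set $S^A$ described below is a feasible solution of PKP with $\prod_{j\in S^A}p_j\ge(1-\varepsilon)z^*$, where $z^*$ is the optimal value of the PKP instance.
   Context: The Product Knapsack Problem (PKP): items $j\in N=\{1,\dots,n\}$ with integer weights $w_j$ and integer profits $p_j$, and a positive integer capacity $C$; find $S\subseteq N$ with $\sum_{j\in S}w_j\le C$ maximizing $\prod_{j\in S}p_j$ (the empty set has value $0$). Instances satisfy: (a) $w_j\le C$; (b) $p_j\ne 0$; (c) for each $j$ with $p_j<0$ there is $j'\ne j$ with $p_{j'}<0$ and $w_j+w_{j'}\le C$; (d) $w_j\ge 0$; (e) $p_j<0$ whenever $w_j=0$. Let $N^-=\{j:p_j\le -1\}$, $p_{\max}=\max_j|p_j|$, and assume $p_{\max}\ge 2$; $\log$ is base 2. Set $K=\varepsilon/n^2$ and scaled profits $\tilde p_j=\lfloor \log(|p_j|)/K\rfloor$. The set $S^A$ is computed by dynamic programming over the arrays $W^+_j(\tilde p)$, $W^-_j(\tilde p)$ (minimum total weight of a subset of $\{1,\dots,j\}$ with scaled-profit sum exactly $\tilde p$ and an even, resp. odd, number of items of $N^-$) and is the set represented by $W^+_n(\tilde p)$ for $\tilde p=\max\{\tilde p:W^+_n(\tilde p)\le C\}$; thus $S^A$ satisfies $\sum_{j\in S^A}w_j\le C$, $|S^A\cap N^-|$ is even, and $S^A$ maximizes $\sum_{j\in S}\tilde p_j$ among all such subsets $S\subseteq N$. *)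

(* Defs.v *)
From mathcomp Require Import all_boot all_order all_algebra.
From mathcomp Require Import reals exp.
Set Implicit Arguments. Unset Strict Implicit. Unset Printing Implicit Defensive.
Import Order.TTheory GRing.Theory Num.Theory.
Local Open Scope ring_scope.

Definition pkp_weight (n : nat) (w : 'I_n -> int) (S : {set 'I_n}) : int :=
  \sum_(j in S) w j.

Definition pkp_feasible (n : nat) (w : 'I_n -> int) (C : int) (S : {set 'I_n}) : bool :=
  pkp_weight w S <= C.

Definition pkp_value (n : nat) (p : 'I_n -> int) (S : {set 'I_n}) : int :=
  if S == set0 then 0 else \prod_(j in S) p j.

(* optimal value z^* : maximum of the objective over all feasible subsets
   (the empty set is feasible with value 0, so 0 is a valid seed) *)
Definition pkp_opt (n : nat) (w p : 'I_n -> int) (C : int) : int :=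
  \big[Num.max/0]_(S : {set 'I_n} | pkp_feasible w C S) pkp_value p S.

Definition Nneg (n : nat) (p : 'I_n -> int) : {set 'I_n} := [set j | p j <= -1].

Definition pkp_instance (n : nat) (w p : 'I_n -> int) (C : int) : Prop :=
  0 < C /\
  [/\ (forall j, w j <= C),
      (forall j, p j != 0),
      (forall j, p j < 0 -> exists j', [/\ j' != j, p j' < 0 & w j + w j' <= C]),
      (forall j, 0 <= w j)
    & (forall j, w j = 0 -> p j < 0)].

Definition pmax (n : nat) (p : 'I_n -> int) : int := \max_(j < n) `|p j|.

Definition log2 {R : realType} (x : R) : R := ln x / ln 2.

Definition scaleK {R : realType} (eps : R) (n : nat) : R := eps / (n%:R ^+ 2).

Definition ptilde {R : realType} (eps : R) (n : nat) (p : 'I_n -> int) (j : 'I_n) : int :=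
  Num.floor (log2 ((`|p j|)%:~R : R) / scaleK eps n).

Definition is_SA {R : realType} (eps : R) (n : nat) (w p : 'I_n -> int) (C : int)
    (S : {set 'I_n}) : Prop :=
  [/\ pkp_weight w S <= C,
      ~~ odd #|S :&: Nneg p|
    & forall T : {set 'I_n}, pkp_weight w T <= C -> ~~ odd #|T :&: Nneg p| ->
        \sum_(j in T) ptilde eps p j <= \sum_(j in S) ptilde eps p j].

(* Main.v *)
Require Import Defs.
From mathcomp Require Import all_boot all_order all_algebra.
From mathcomp Require Import reals exp.
From mathcomp Require Import sequences.
From mathcomp Require Import zify ring.
Import Order.TTheory GRing.Theory Num.Theory.
Local Open Scope ring_scope.

Lemma sign_prod (n : nat) (p : 'I_n -> int) (S : {set 'I_n}) :
  \prod_(j in S) p j = (-1) ^+ #|S :&: Nneg p| * \prod_(j in S) `|p j|.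
Proof.
rewrite (eq_bigr (fun j => (-1) ^+ (p j < 0)%R * `|p j|)); last first.
  by move=> j _; rewrite mulr_sign_norm.
rewrite big_split /=; congr (_ * _).
rewrite (bigID (fun j => p j < 0)) /=.
rewrite [X in _ * X]big1; last by move=> j /andP[_ /negbTE ->].
rewrite mulr1 (eq_bigr (fun _ => -1)); last by move=> j /andP[_ ->].
rewrite prodr_const; congr (_ ^+ _); apply: eq_card => j.
rewrite !inE /=.
have -> : (p j <= -1) = (p j < 0) by apply/idP/idP => /= H; lia.
by [].
Qed.

Lemma absprod_gt0 (n : nat) (p : 'I_n -> int) (S : {set 'I_n}) :
  (forall j, p j != 0) -> 0 < \prod_(j in S) `|p j|.
Proof. by move=> pn0; apply: prodr_gt0 => j _; rewrite normr_gt0. Qed.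

Theorem proposition2 (R : realType) (n : nat) (w p : 'I_n -> int) (C : int)
    (eps : R) (SA : {set 'I_n}) :
  pkp_instance w p C ->
  2 <= pmax p ->
  0 < eps < 1 ->
  is_SA eps w p C SA ->
  pkp_feasible w C SA /\
  (1 - eps) * (pkp_opt w p C)%:~R <= ((\prod_(j in SA) p j)%:~R : R).
Proof.
move=> [C0 [_ pn0 _ _ _]] pm2 /andP[e0 e1] [wSA evSA optSA].
split; first exact: wSA.
have prSA : \prod_(j in SA) p j = \prod_(j in SA) `|p j|.
  by rewrite sign_prod -signr_odd (negbTE evSA) expr0 mul1r.
have SApos : 0 < \prod_(j in SA) p j by rewrite prSA absprod_gt0.
have Pz : pkp_opt w p C = 0 \/
   exists2 S, pkp_feasible w C S & pkp_opt w p C = pkp_value p S.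
  rewrite /pkp_opt; apply: (big_ind (fun x => x = 0 \/
      exists2 S, pkp_feasible w C S & x = pkp_value p S)).
  - by left.
  - by move=> x y Hx Hy; rewrite /Num.max; case: ifP.
  - by move=> S HS; right; exists S.
have easy : forall z : int, z <= 0 -> (1 - eps) * z%:~R <= ((\prod_(j in SA) p j)%:~R : R).
  move=> z z0; apply: (le_trans (y := 0)); last by rewrite ler0z ltW.
  by apply: mulr_ge0_le0; [rewrite subr_ge0 ltW | rewrite lerz0].
case: Pz => [-> | [S HS ->]]; first exact: easy.
rewrite /pkp_value; case: ifP => [_|Sn0]; first exact: easy.
have [z0|zpos] := lerP (\prod_(j in S) p j) 0; first exact: easy.
have evS : ~~ odd #|S :&: Nneg p|.
  apply/negP => oddS; move: zpos; rewrite sign_prod -signr_odd oddS expr1 mulN1r oppr_gt0.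
  by rewrite ltNge ltW // absprod_gt0.
have prS : \prod_(j in S) p j = \prod_(j in S) `|p j|.
  by rewrite sign_prod -signr_odd (negbTE evS) expr0 mul1r.
have [j0 j0S] : exists j, j \in S.
  by case/set0Pn: (negbT Sn0) => j Hj; exists j.
have n0 : (0 < n)%N by case: j0 {j0S} => m /=; lia.
have opt := optSA S HS evS.
rewrite prS prSA !rmorph_prod /=.
pose a j := ln ((`|p j|)%:~R : R).
have apos : forall j, 0 < ((`|p j|)%:~R : R).
  by move=> j; rewrite ltr0z normr_gt0.
have ea : forall T : {set 'I_n}, \prod_(j in T) ((`|p j|)%:~R : R) = expR (\sum_(j in T) a j).
  move=> T; rewrite expR_sum; apply: eq_bigr => j _.
  by rewrite /a lnK // posrE apos.
rewrite !ea.
pose K := scaleK eps n.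
have K0 : 0 < K by rewrite /K /scaleK divr_gt0 // exprn_gt0 // ltr0n.
have l20 : 0 < ln (2 : R) by rewrite ln_gt0 // ltr1n.
have l21 : ln (2 : R) <= 1.
  by have := @le_ln1Dx R 1; rewrite (_ : 1 + 1 = 2) //; apply; rewrite (lt_trans (ltrN10 R)) // ltr01.
pose c := ln (2 : R) * K.
pose t j := log2 ((`|p j|)%:~R : R) / K.
have at_ : forall j, a j = c * t j.
  move=> j; rewrite /c /t /log2 /a; field.
  by apply/andP; split; rewrite gt_eqF.
have c0 : 0 < c by rewrite mulr_gt0.
have pt : forall j, ptilde eps p j = Num.floor (t j) by [].
have sumS : \sum_(j in S) t j <= \sum_(j in S) ((ptilde eps p j)%:~R : R) + n%:R.
  apply: (le_trans (y := \sum_(j in S) ((ptilde eps p j)%:~R + 1))).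
    apply: ler_sum => j _; rewrite pt; apply: ltW.
    by rewrite (_ : (1:R) = (1:int)%:~R) // -intrD floorD1_gt.
  rewrite big_split /= sumr_const lerD2l.
  by rewrite ler_nat; apply: (leq_trans (max_card _)); rewrite card_ord.
have sumSA : \sum_(j in SA) ((ptilde eps p j)%:~R : R) <= \sum_(j in SA) t j.
  by apply: ler_sum => j _; rewrite pt floor_le.
have optR : \sum_(j in S) ((ptilde eps p j)%:~R : R) <= \sum_(j in SA) ((ptilde eps p j)%:~R : R).
  by rewrite -!rmorph_sum /= ler_int.
have cn : c * n%:R <= eps.
  have -> : c * n%:R = ln 2 * eps / n%:R.
    rewrite /c /K /scaleK; field; by rewrite pnatr_eq0 -lt0n.
  rewrite ler_pdivrMr ?ltr0n //.
  apply: (le_trans (y := eps)); first by rewrite -[X in _ <= X]mul1r ler_wpM2r // ltW.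
  by rewrite -[X in X <= _]mulr1 ler_pM2l // ler1n.
have key : \sum_(j in S) a j - eps <= \sum_(j in SA) a j.
  rewrite (eq_bigr _ (fun j _ => at_ j)) [X in _ <= X](eq_bigr _ (fun j _ => at_ j)).
  rewrite -!mulr_sumr lerBlDr.
  apply: (le_trans (y := c * (\sum_(j in SA) t j + n%:R))).
    apply: ler_wpM2l; first exact: ltW c0. apply: (le_trans sumS); rewrite lerD2r.
    exact: le_trans optR sumSA.
  by rewrite mulrDr lerD2l.
apply: (le_trans (y := expR (- eps) * expR (\sum_(j in S) a j))).
  by rewrite ler_wpM2r ?expR_ge0 // expR_ge1Dx.
by rewrite -expRD addrC ler_expR.
Qed.
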